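(* Let $W$ be a polynomial representation of $\mathrm{GL}$. Then $\Delta(R\otimes W^{(1)})=0$.
   Context: $k$ is algebraically closed of characteristic $p>0$; $\mathrm{GL}=\bigcup_n\mathrm{GL}_n(k)$, $\mathbf V=\bigcup_n k^n$; $R=\bigwedge(\mathbf V)$. Polynomial representations (subquotients of direct sums of tensor powers of $\mathbf V$) are equivalent to strict polynomial functors, so $M(U)$ makes sense for a vector space $U$. $W^{(1)}$ is the Frobenius twist: the pullback of $W$ along the homomorphism $\mathrm{GL}\to\mathrm{GL}$ raising each matrix entry to the $p$-th power. For an $R$-module $M$ (graded $R$-module with compatible polynomial $\mathrm{GL}$-action), $\Sigma(M)$ is the weight-$1$ subspace of $M(k\oplus\mathbf V)$ for the torus $k^\times$ acting on the new coordinate, $i_M:M\to\Sigma(M)$ is multiplication by the new basis vector $y_1$, and $\Delta(M)=\mathrm{coker}(i_M)$. *)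

(* Defs.v *)
From HB Require Import structures.
From mathcomp Require Import all_boot all_order all_algebra.
From mathcomp Require Import mpoly.
Set Implicit Arguments. Unset Strict Implicit. Unset Printing Implicit Defensive.
Import GRing.Theory.
Local Open Scope ring_scope.

(* Vector spaces are k^n, elements are row vectors; a matrix A : 'M_(m,n)
   represents the linear map k^m -> k^n, v |-> v *m A.  Composition of
   A : k^m -> k^n followed by B : k^n -> k^l is A *m B. *)

(* A polynomial representation of GL = (equivalently) a strict polynomial
   functor, given by its values on the spaces k^n and its (polynomial)
   action on all linear maps k^m -> k^n.  Polynomiality is the standard
   (comodule) one: for each vector v, the orbit map A |-> F(A) v is a
   polynomial map with values in a finite-dimensional subspace, i.e. a
   finite sum  sum_j p_j(entries of A) u_j . *)
Record polyFunctor (k : fieldType) := PolyFunctor {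
  pf_obj : nat -> lmodType k;
  pf_map : forall m n, 'M[k]_(m, n) -> pf_obj m -> pf_obj n;
  pf_linear : forall m n (A : 'M[k]_(m, n)) (a : k) (u v : pf_obj m),
      pf_map A (a *: u + v) = a *: pf_map A u + pf_map A v;
  pf_id : forall n (v : pf_obj n), pf_map (1%:M : 'M[k]_n) v = v;
  pf_comp : forall m n l (A : 'M[k]_(m, n)) (B : 'M[k]_(n, l)) (v : pf_obj m),
      pf_map (A *m B) v = pf_map B (pf_map A v);
  pf_poly : forall m n (v : pf_obj m),
      exists s : seq ({mpoly k[m * n]} * pf_obj n),
      forall A : 'M[k]_(m, n),
        pf_map A v = \sum_(q <- s) (q.1).@[fun i => mxvec A 0 i] *: q.2
}.

Section Defs.
Variable k : fieldType.

(* entrywise p-th power: the matrix of the Frobenius-twisted map *)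
Definition frobmx (p : nat) m n (A : 'M[k]_(m, n)) : 'M[k]_(m, n) :=
  map_mx (fun a => a ^+ p) A.

(* Exterior algebra: basis e_S (S ordered increasingly) indexed by subsets.
   Coefficient of e_T in (Lambda A)(e_S): the minor det A[S,T]. *)
Definition extc m n (A : 'M[k]_(m, n)) (S : {set 'I_m}) (T : {set 'I_n}) : k :=
  if (#|S| =P #|T|) is ReflectT h then
    \det (\matrix_(i, j) A (@enum_val _ (mem S) i)
                           (@enum_val _ (mem T) (cast_ord h j)))
  else 0.

(* sign of e_S /\ e_T = sign * e_(S u T) for disjoint S, T *)
Definition wsgn n (S T : {set 'I_n}) : k :=
  (-1) ^+ #|[set st : 'I_n * 'I_n | [&& st.1 \in S, st.2 \in T & (st.2 < st.1)%N]]|.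

End Defs.

Section Module.
Variables (k : fieldType) (W : polyFunctor k) (p : nat).

(* M = R (x) W^(1) evaluated at k^n :  Lambda(k^n) (x) W(k^n), written as
   the coefficient family (e_S-component) S |-> element of W(k^n). *)
Definition Mt n := {set 'I_n} -> pf_obj W n.

(* functoriality of R (x) W^(1) : Lambda(A) (x) W(A^(p)) *)
Definition Mact m n (A : 'M[k]_(m, n)) (x : Mt m) : Mt n :=
  fun T => \sum_(S : {set 'I_m}) extc A S T *: @pf_map k W m n (frobmx p A) (x S).

(* R-module structure: exterior multiplication on the R factor *)
Definition Rmul n (r : {set 'I_n} -> k) (x : Mt n) : Mt n :=
  fun U => \sum_(S : {set 'I_n}) \sum_(T : {set 'I_n})
     (if (S :&: T == set0) && (S :|: T == U) then wsgn k S T * r S else 0) *: x T.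

(* k (+) k^n = k^(n+1), the new coordinate being index 0 *)
Definition ycoord n : {set 'I_n.+1} -> k :=
  fun S => if S == [set ord0] then 1 else 0.

Definition incl n : 'M[k]_(n, n.+1) := row_mx (0 : 'M[k]_(n, 1)) 1%:M.

Definition torus n (t : k) : 'M[k]_(n.+1) :=
  diag_mx (\row_(i < n.+1) if i == ord0 then t else 1).

(* Sigma(M)(k^n): weight-1 subspace of M(k (+) k^n) for the torus k^x *)
Definition weight1 n (x : Mt n.+1) : Prop :=
  forall t : k, t != 0 -> Mact (torus n t) x = (fun T => t *: x T).

Definition iM n (x : Mt n) : Mt n.+1 := Rmul (@ycoord n) (Mact (incl n) x).

End Module.

(* Main.v *)
Require Import Defs.
From HB Require Import structures.
From mathcomp Require Import all_boot all_order all_algebra.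
From mathcomp Require Import mpoly.
Set Implicit Arguments. Unset Strict Implicit. Unset Printing Implicit Defensive.
Import GRing.Theory.
Local Open Scope ring_scope.

Lemma vanish_coef (k : fieldType) (V : lmodType k) (d : nat) (a : 'rV[k]_d)
  (Ha : forall i j, i != j -> a 0 i != a 0 j)
  (s : seq ({poly k} * V)) (Hs : forall q, q \in s -> (size q.1 <= d)%N)
  (H : forall j, \sum_(q <- s) q.1.[a 0 j] *: q.2 = 0) :
  forall i : nat, \sum_(q <- s) q.1`_i *: q.2 = 0.
Proof.
move=> i; case: (ltnP i d) => Hid; last first.
  rewrite big_seq big1 // => q /Hs Hq; rewrite nth_default ?scale0r //.
  exact: leq_trans Hq Hid.
set VM := Vandermonde d a.
have HV : VM \in unitmx.
  rewrite unitmxE det_Vandermonde unitfE; apply/prodf_neq0 => i0 _.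
  apply/prodf_neq0 => j0 Hij; rewrite subr_eq0; apply: Ha.
  by apply/eqP => E; move: Hij; rewrite E ltnn.
have key : forall Q : {poly k}, (size Q <= d)%N ->
    Q`_i = \sum_(j < d) Q.[a 0 j] * invmx VM j (Ordinal Hid).
  move=> Q HQ; set c : 'rV[k]_d := \row_(l < d) Q`_l.
  have E : c *m VM = \row_(j < d) Q.[a 0 j].
    apply/rowP => j; rewrite !mxE (horner_coef_wide _ HQ).
    by apply: eq_bigr => l _; rewrite !mxE.
  have := congr1 (fun M : 'M[k]_(1,d) => M 0 (Ordinal Hid)) (mulmxK HV c).
  rewrite E !mxE => <-; by apply: eq_bigr => j _; rewrite mxE.
rewrite big_seq (eq_bigr (fun q => \sum_(j < d) (q.1.[a 0 j] * invmx VM j (Ordinal Hid)) *: q.2)); last first.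
  by move=> q /Hs Hq; rewrite (key _ Hq) scaler_suml.
rewrite -big_seq exchange_big big1 // => j _.
under eq_bigr do rewrite mulrC -scalerA.
by rewrite -scaler_sumr H scaler0.
Qed.

Lemma fresh (k : closedFieldType) (l : seq k) : exists r : k, r \notin l.
Proof.
set P := \prod_(a <- 0 :: l) ('X - a%:P) + 1.
have HP : size P != 1%N.
  rewrite /P size_polyDl size_prod_XsubC //= size_poly1.
  by [].
have [r Hr] := closed_rootP P HP; exists r; apply/negP => Hin.
move: Hr; rewrite /root /P hornerD hornerC.
have : root (\prod_(a <- 0 :: l) ('X - a%:P)) r by rewrite root_prod_XsubC inE Hin orbT.
by move/eqP => ->; rewrite add0r oner_eq0.
Qed.

Lemma points (k : closedFieldType) (d : nat) :
  exists a : 'rV[k]_d, (forall i j, i != j -> a 0 i != a 0 j) /\ (forall i, a 0 i != 0).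
Proof.
have : exists s : seq k, size s = d /\ uniq (0 :: s).
  elim: d => [|d [s [Hs Hu]]]; first by exists [::].
  have [r Hr] := fresh (0 :: s); exists (r :: s); split; first by rewrite /= Hs.
  move: Hu Hr; rewrite /= !inE => /andP [H0 Hu] /norP [Hr0 Hrs].
  by rewrite negb_or eq_sym Hr0 H0 Hrs Hu.
case=> s [Hs Hu]; exists (\row_(j < d) s`_j); split.
  move=> i j Hij; rewrite !mxE; move: Hu => /= /andP [_ Hu].
  rewrite nth_uniq ?Hs //; by apply/negP => /eqP /val_inj /eqP; apply/negP.
move=> i; rewrite mxE; move: Hu => /= /andP [H0 _].
apply/negP => /eqP E; move: H0; rewrite -E mem_nth // Hs //.
Qed.

Lemma mpoly_univ (k : fieldType) N (e : 'I_N -> {poly k}) (q : {mpoly k[N]}) :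
  exists Q : {poly k}, forall s, q.@[fun i => (e i).[s]] = Q.[s].
Proof.
exists (\sum_(m <- msupp q) q@_m *: \prod_(i < N) e i ^+ m i) => s.
rewrite mevalE horner_sum; apply: eq_bigr => m _.
by rewrite hornerZ horner_prod; congr (_ * _); apply: eq_bigr => i _; rewrite horner_exp.
Qed.
Lemma torusE (k : fieldType) n (t : k) (i j : 'I_n.+1) :
  torus n t i j = if i == j then (if i == ord0 then t else 1) else 0.
Proof. by rewrite /torus !mxE; case: (i == j); case: (i == ord0); rewrite ?mulr1n ?mulr0n. Qed.

Lemma frob_torus (k : fieldType) (p : nat) n (t : k) : (0 < p)%N ->
  frobmx p (torus n t) = torus n (t ^+ p).
Proof.
move=> Hp; apply/matrixP => i j; rewrite /frobmx mxE !torusE.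
by case: eqP => _; [case: eqP => _; rewrite ?expr1n | rewrite expr0n eqn0Ngt Hp].
Qed.

Lemma torus_poly (k : fieldType) (W : polyFunctor k) n (v : pf_obj W n.+1) :
  exists s : seq ({poly k} * pf_obj W n.+1),
    forall t, pf_map (torus n t) v = \sum_(q <- s) q.1.[t] *: q.2.
Proof.
have [s0 Hs0] := @pf_poly _ W n.+1 n.+1 v.
set TP : 'M[{poly k}]_(n.+1) := \matrix_(i, j) (if i == j then (if i == ord0 then 'X else 1) else 0).
have HT : forall t (i : 'I_(n.+1 * n.+1)), mxvec (torus n t) 0 i = (mxvec TP 0 i).[t].
  move=> t i; case/mxvec_indexP: i => i j; rewrite !mxvecE torusE mxE.
  by case: eqP => _; [case: eqP => _; rewrite ?hornerX ?hornerC | rewrite hornerC].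
suff [s Hs] : exists s : seq ({poly k} * pf_obj W n.+1), forall t,
    \sum_(q <- s0) q.1.@[fun i => mxvec (torus n t) 0 i] *: q.2 = \sum_(q <- s) q.1.[t] *: q.2.
  by exists s => t; rewrite Hs0 Hs.
elim: s0 {Hs0} => [|q s0 [s Hs]]; first by exists [::] => t; rewrite !big_nil.
have [Q HQ] := mpoly_univ (fun i => mxvec TP 0 i) q.1.
exists ((Q, q.2) :: s) => t; rewrite !big_cons Hs /=; congr (_ *: _ + _).
rewrite -HQ; apply: meval_eq => i; exact: HT.
Qed.

Lemma weight_core (k : closedFieldType) (p : nat) (W : polyFunctor k) n
  (v : pf_obj W n.+1) (c : {poly k})
  (H : forall t : k, t != 0 -> pf_map (torus n (t ^+ p)) v = c.[t] *: v) :
  exists s : seq ({poly k} * pf_obj W n.+1),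
    (forall t, pf_map (torus n t) v = \sum_(q <- s) q.1.[t] *: q.2) /\
    forall i, c`_i *: v = \sum_(q <- s) (q.1 \Po 'X^p)`_i *: q.2.
Proof.
have [s Hs] := torus_poly v; exists s; split => // i.
pose L := (- c, v) :: [seq (q.1 \Po 'X^p, q.2) | q <- s].
pose d := \sum_(q <- L) size q.1.
have [a [Ha Ha0]] := points k d.
have HL : forall q, q \in L -> (size q.1 <= d)%N.
  move=> q Hq; rewrite /d (big_rem _ Hq) /=; exact: leq_addr.
have Hz : forall j, \sum_(q <- L) q.1.[a 0 j] *: q.2 = 0.
  move=> j; rewrite /L big_cons big_map /=.
  under eq_bigr do rewrite horner_comp hornerXn.
  by rewrite -Hs H // hornerN scaleNr addNr.
have := vanish_coef Ha HL Hz i; rewrite /L big_cons big_map /= coefN scaleNr.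
by move/eqP; rewrite addrC subr_eq0 => /eqP.
Qed.

Lemma weight_one (k : closedFieldType) (p : nat) (Hp : (1 < p)%N) (W : polyFunctor k) n
  (v : pf_obj W n.+1)
  (H : forall t : k, t != 0 -> pf_map (torus n (t ^+ p)) v = t *: v) : v = 0.
Proof.
have H' : forall t : k, t != 0 -> pf_map (torus n (t ^+ p)) v = ('X : {poly k}).[t] *: v.
  by move=> t Ht; rewrite hornerX H.
have [s [_ Hs]] := weight_core H'.
have := Hs 1%N; rewrite coefX scale1r => ->.
apply: big1 => q _; rewrite coef_comp_poly_Xn ?dvdn1 ?gtn_eqF ?scale0r //; exact: ltnW.
Qed.

Lemma weight_zero (k : closedFieldType) (p : nat) (Hp : (0 < p)%N) (W : polyFunctor k) n
  (v : pf_obj W n.+1)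
  (H : forall t : k, t != 0 -> pf_map (torus n (t ^+ p)) v = v) : pf_map (torus n 0) v = v.
Proof.
have H' : forall t : k, t != 0 -> pf_map (torus n (t ^+ p)) v = (1 : {poly k}).[t] *: v.
  by move=> t Ht; rewrite hornerC scale1r H.
have [s [Hs0 Hs]] := weight_core H'.
rewrite Hs0; have := Hs 0%N; rewrite coefC scale1r => ->.
by apply: eq_bigr => q _; rewrite coef_comp_poly_Xn // dvdn0 div0n horner_coef0.
Qed.
Lemma extc_card (k : fieldType) m n (A : 'M[k]_(m, n)) (S : {set 'I_m}) (T : {set 'I_n}) :
  #|S| != #|T| -> extc A S T = 0.
Proof. by rewrite /extc; case: eqP. Qed.

Lemma extc_zero_row (k : fieldType) m n (A : 'M[k]_(m, n)) (S : {set 'I_m}) (T : {set 'I_n}) s :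
  s \in S -> (forall j, j \in T -> A s j = 0) -> extc A S T = 0.
Proof.
move=> Hs HA; rewrite /extc; case: eqP => // h.
rewrite (expand_det_row _ (enum_rank_in Hs s)) big1 // => j _.
by rewrite mxE enum_rankK_in // HA ?mul0r // enum_valP.
Qed.

Lemma diff_elt (T : finType) (S U : {set T}) :
  #|S| = #|U| -> S != U -> exists2 s, s \in S & s \notin U.
Proof.
move=> Hc HSU; case: (boolP (S \subset U)) => [Hsub|].
  have [_] := subset_leqif_cards Hsub; rewrite Hc eqxx => /esym E.
  by rewrite E in HSU.
by case/subsetPn => s; exists s.
Qed.

Lemma extc_diag (k : fieldType) n (d : 'rV[k]_n) (T : {set 'I_n}) :
  extc (diag_mx d) T T = \prod_(s in T) d 0 s.
Proof.
rewrite /extc; case: eqP => [h|/(_ erefl) []].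
rewrite (_ : \matrix_(i, j) _ = diag_mx (\row_i d 0 (@enum_val _ (mem T) i))).
  by rewrite det_diag [RHS]big_enum_val; apply: eq_bigr => i _; rewrite mxE.
apply/matrixP => i j; rewrite !mxE cast_ord_id (inj_eq enum_val_inj).
by [].
Qed.

Lemma prod_torus (k : fieldType) n (t : k) (T : {set 'I_n.+1}) :
  \prod_(s in T) (\row_(i < n.+1) if i == ord0 then t else 1) 0 s
  = if ord0 \in T then t else 1.
Proof.
case: (boolP (ord0 \in T)) => H.
  rewrite (bigD1 ord0) //= mxE eqxx big1 ?mulr1 // => i /andP [_ Hi].
  by rewrite mxE (negbTE Hi).
rewrite big1 // => i Hi; rewrite mxE; case: eqP => // E.
by rewrite -E Hi in H.
Qed.

Lemma Mact_torus (k : fieldType) (W : polyFunctor k) p n (t : k) (x : Mt W n.+1) (T : {set 'I_n.+1}) :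
  Mact p (torus n t) x T = (if ord0 \in T then t else 1) *: pf_map (frobmx p (torus n t)) (x T).
Proof.
rewrite /Mact (bigD1 T) //= big1 ?addr0.
  by rewrite {1}/torus extc_diag prod_torus.
move=> S HST; case: (#|S| =P #|T|) => h; last by rewrite extc_card ?scale0r //; apply/eqP.
have [s Hs HsT] := diff_elt h HST.
rewrite (extc_zero_row (s := s)) ?scale0r // => j Hj; rewrite torusE.
case: eqP => // E; by rewrite E Hj in HsT.
Qed.

Lemma inclE (k : fieldType) n (i : 'I_n) (j : 'I_n.+1) :
  incl k n i j = (j == lift ord0 i)%:R.
Proof.
rewrite /incl mxE; case: splitP => j' Hj; rewrite mxE.
  rewrite (_ : (j == lift ord0 i) = false) //; apply/negP => /eqP E.
  by have := ltn_ord j'; rewrite -Hj E /= /bump leq0n add1n ltnS ltn0.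
by congr (_%:R); rewrite -!val_eqE /= Hj /bump leq0n !add1n eqSS eq_sym.
Qed.

Lemma enum_lift n (S0 : {set 'I_n}) :
  enum (lift ord0 @: S0) = map (lift ord0) (enum S0).
Proof.
rewrite /enum_mem -!enumT enum_ordSl /=.
have -> : (ord0 \in lift ord0 @: S0) = false.
  by apply/negP => /imsetP [i _ /eqP]; rewrite (negbTE (neq_lift _ _)).
rewrite filter_map; congr map; apply: eq_filter => i /=.
by rewrite mem_imset //; exact: lift_inj.
Qed.

Lemma extc_incl_eq (k : fieldType) n (S0 : {set 'I_n}) :
  extc (incl k n) S0 (lift ord0 @: S0) = 1.
Proof.
have Hc : #|S0| = #|lift ord0 @: S0| by rewrite card_imset //; exact: lift_inj.
rewrite /extc; case: eqP => [h|/(_ Hc) []].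
have Ev : forall j, @enum_val _ (mem (lift ord0 @: S0)) (cast_ord h j)
                   = lift ord0 (@enum_val _ (mem S0) j).
  move=> j; rewrite /enum_val /= enum_lift (nth_map (enum_default j)) //.
  by rewrite -cardE ltn_ord.
rewrite (_ : \matrix_(i, j) _ = 1%:M) ?det1 //.
apply/matrixP => i j; rewrite [LHS]mxE inclE Ev (inj_eq lift_inj) (inj_eq enum_val_inj) [RHS]mxE.
by rewrite eq_sym.
Qed.

Lemma extc_incl_neq (k : fieldType) n (S0 S : {set 'I_n}) :
  S != S0 -> extc (incl k n) S (lift ord0 @: S0) = 0.
Proof.
move=> HS; have Hc : #|S0| = #|lift ord0 @: S0| by rewrite card_imset //; exact: lift_inj.
case: (#|S| =P #|S0|) => h; last by rewrite extc_card // -Hc; apply/eqP.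
have [s Hs HsT] := diff_elt h HS.
rewrite (extc_zero_row (s := s)) // => j /imsetP [j0 Hj0 ->].
rewrite inclE (inj_eq lift_inj); case: eqP => // E.
by rewrite -E Hj0 in HsT.
Qed.

Lemma Rmul_y (k : fieldType) (W : polyFunctor k) n (z : Mt W n.+1) (U : {set 'I_n.+1}) :
  Rmul (@ycoord k n) z U = if ord0 \in U then z (U :\ ord0) else 0.
Proof.
rewrite /Rmul (bigD1 [set ord0]) //= [X in _ + X]big1 ?addr0; last first.
  move=> S HS; apply: big1 => T _; rewrite /ycoord (negbTE HS) mulr0.
  by case: ifP => _; rewrite scale0r.
rewrite /ycoord eqxx; under eq_bigr => T _ do rewrite mulr1.
case: (boolP (ord0 \in U)) => HU; last first.
  apply: big1 => T _; case: ifP => [/andP [_ /eqP HUe]|_]; last by rewrite scale0r.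
  by rewrite -HUe !inE eqxx in HU.
rewrite (bigD1 (U :\ ord0)) //= big1 ?addr0.
  have -> : [set ord0] :&: (U :\ ord0) == set0.
    by apply/eqP/setP => i; rewrite !inE; case: (i == ord0).
  rewrite setD1K // eqxx /=.
  rewrite /wsgn (_ : [set st | _] = set0) ?cards0 ?expr0 ?scale1r //.
  apply/setP => -[a b]; rewrite !inE /=; apply/negP => /and3P [/eqP -> _].
  by rewrite [X in (_ < X)%N]/= ltn0.
move=> T HT; case: ifP => [/andP [/eqP HI /eqP HUe]|_]; last by rewrite scale0r.
exfalso; move/negP: HT; apply; rewrite -HUe; apply/eqP/setP => i; rewrite !inE.
case: (eqVneq i ord0) => [->|] //=.
apply/negP => H0; have : ord0 \in [set ord0] :&: T by rewrite !inE eqxx H0.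
by rewrite HI inE.
Qed.

Lemma frob_incl (k : fieldType) p n : (0 < p)%N -> frobmx p (incl k n) = incl k n.
Proof.
move=> Hp; apply/matrixP => i j; rewrite /frobmx [LHS]mxE !inclE.
by case: eqP => _; rewrite ?expr1n // expr0n eqn0Ngt Hp.
Qed.

Lemma Mact_incl (k : fieldType) (W : polyFunctor k) p n (Hp : (0 < p)%N) (y : Mt W n)
  (T : {set 'I_n.+1}) :
  ord0 \notin T -> Mact p (incl k n) y T = pf_map (incl k n) (y [set i | lift ord0 i \in T]).
Proof.
move=> H; set S0 := [set i | lift ord0 i \in T].
have HT : T = lift ord0 @: S0.
  apply/setP => j; case: (unliftP ord0 j) => [j' ->|->].
    by rewrite mem_imset ?inE //; exact: lift_inj.
  rewrite (negbTE H); apply/esym/negP => /imsetP [i _ /eqP].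
  by rewrite (negbTE (neq_lift _ _)).
rewrite /Mact {1}HT (bigD1 S0) //= big1 ?addr0.
  by rewrite extc_incl_eq scale1r frob_incl.
by move=> S HS; rewrite extc_incl_neq // scale0r.
Qed.

Definition projmx (k : fieldType) n : 'M[k]_(n.+1, n) :=
  \matrix_(i < n.+1, j < n) (i == lift ord0 j)%:R.

Lemma proj_incl (k : fieldType) n : projmx k n *m incl k n = torus n 0.
Proof.
apply/matrixP => i j; rewrite torusE [LHS]mxE.
case: (unliftP ord0 i) => [i' ->|->].
  rewrite (bigD1 i') //= big1 ?addr0.
    rewrite inclE mxE eqxx mul1r eq_sym.
    by case: eqP.
  by move=> l Hl; rewrite mxE (inj_eq lift_inj) eq_sym (negbTE Hl) mul0r.
rewrite big1; last by move=> l _; rewrite mxE (negbTE (neq_lift _ _)) mul0r.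
by rewrite eqxx; case: eqP.
Qed.

From Stdlib Require Import FunctionalExtensionality.
Unset Implicit Arguments. Set Strict Implicit.

Theorem corollary4p4 (k : closedFieldType) (p : nat) (Hp : p \in [pchar k])
  (W : polyFunctor k) (n : nat) (x : Mt W n.+1) :
  weight1 p x -> exists y : Mt W n, iM p y = x.
Proof.
move=> Hw.
have Hp1 : (1 < p)%N by apply: prime_gt1; exact: pcharf_prime Hp.
have Hp0 : (0 < p)%N by apply: ltnW.
have Hx : forall U : {set 'I_n.+1}, forall t : k, t != 0 ->
    (if ord0 \in U then t else 1) *: pf_map (torus n (t ^+ p)) (x U) = t *: x U.
  move=> U t Ht; rewrite -frob_torus // -Mact_torus.
  by rewrite (Hw t Ht).
have Hin : forall U : {set 'I_n.+1}, ord0 \in U -> pf_map (torus n 0) (x U) = x U.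
  move=> U HU; apply: (weight_zero Hp0) => t Ht.
  have := Hx U t Ht; rewrite HU => /(congr1 (fun v => t^-1 *: v)).
  by rewrite !scalerA mulVf // !scale1r.
have Hout : forall U : {set 'I_n.+1}, ord0 \notin U -> x U = 0.
  move=> U HU; apply: (weight_one Hp1) => t Ht.
  by have := Hx U t Ht; rewrite (negbTE HU) scale1r.
exists (fun S : {set 'I_n} => pf_map (projmx k n) (x (ord0 |: lift ord0 @: S))).
apply: functional_extensionality => U.
rewrite /iM Rmul_y; case: ifP => HU; last by rewrite Hout // HU.
rewrite Mact_incl //; last by rewrite !inE eqxx.
rewrite -pf_comp proj_incl.
have -> : ord0 |: lift ord0 @: [set i | lift ord0 i \in U :\ ord0] = U.
  apply/setP => j; rewrite !inE; case: (unliftP ord0 j) => [j' ->|->].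
    rewrite mem_imset; last exact: lift_inj.
    have F : (lift ord0 j' == ord0) = false by rewrite eq_sym (negbTE (neq_lift _ _)).
    by rewrite !inE F.
  by rewrite eqxx HU.
exact: Hin.
Qed.
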